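(* Let $\alpha\in\mathbb{R}\setminus\mathbb{Q}$ with continued fraction convergents $p_s/q_s$, and let $n$ be an integer with $q_s\leq n<q_{s+1}$. Then $$D_\alpha(n)\geq(2n)^{-n}\,q_{s+1}^{-n/q_s}.$$
   Context: $D_\alpha(n)=\prod_{k=1}^n\operatorname{dist}(k\alpha,\mathbb{Z})$. Continued fractions: $\alpha=[a_0;a_1,a_2,\dots]$ with integers $a_j\geq1$ for $j\geq1$; convergents $p_s/q_s=[a_0;a_1,\dots,a_s]$ with $p_s=a_sp_{s-1}+p_{s-2}$, $q_s=a_sq_{s-1}+q_{s-2}$ for $s\geq1$, $p_0=a_0$, $q_0=1$, $p_{-1}=1$, $q_{-1}=0$. *)

(* Defs.v *)
From Stdlib Require Import Reals ZArith.
Open Scope R_scope.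

Definition dist_Z (x : R) : R := Rmin (frac_part x) (1 - frac_part x).

Fixpoint D (alpha : R) (n : nat) : R :=
  match n with
  | O => 1
  | S m => D alpha m * dist_Z (INR (S m) * alpha)
  end.

Fixpoint cf_x (alpha : R) (k : nat) : R :=
  match k with
  | O => alpha
  | S j => / frac_part (cf_x alpha j)
  end.

Definition cf_a (alpha : R) (k : nat) : Z := Int_part (cf_x alpha k).

(* Denominators of convergents: q_0 = 1, q_1 = a_1 (= a_1 q_0 + q_{-1}),
   q_{s+2} = a_{s+2} q_{s+1} + q_s. *)
Fixpoint cf_q (alpha : R) (s : nat) : Z :=
  match s with
  | O => 1%Z
  | S O => cf_a alpha 1
  | S (S k as k') => (cf_a alpha (S k') * cf_q alpha k' + cf_q alpha k)%Z
  end.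

Definition irrational (alpha : R) : Prop :=
  ~ exists (p q : Z), q <> 0%Z /\ alpha = IZR p / IZR q.

(* Main.v *)
Require Import Defs.
From Stdlib Require Import Reals ZArith Lia Lra Psatz.
Open Scope R_scope.

Fixpoint cf_p (alpha : R) (s : nat) : Z :=
  match s with
  | O => cf_a alpha 0
  | S O => (cf_a alpha 1 * cf_a alpha 0 + 1)%Z
  | S (S k as k') => (cf_a alpha (S k') * cf_p alpha k' + cf_p alpha k)%Z
  end.
Definition pm (alpha : R) (s : nat) : Z := match s with O => 1%Z | S k => cf_p alpha k end.
Definition qm (alpha : R) (s : nat) : Z := match s with O => 0%Z | S k => cf_q alpha k end.
Definition sgn (s : nat) : Z := if Nat.even s then 1%Z else (-1)%Z.

Lemma q_rec alpha s : cf_q alpha (S s) = (cf_a alpha (S s) * cf_q alpha s + qm alpha s)%Z.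
Proof. destruct s; simpl; [lia | reflexivity]. Qed.
Lemma p_rec alpha s : cf_p alpha (S s) = (cf_a alpha (S s) * cf_p alpha s + pm alpha s)%Z.
Proof. destruct s; reflexivity. Qed.

Lemma sgn_S s : sgn (S s) = (- sgn s)%Z.
Proof. unfold sgn. rewrite Nat.even_succ, <- Nat.negb_even. destruct (Nat.even s); reflexivity. Qed.

Lemma det alpha s : (cf_p alpha s * qm alpha s - pm alpha s * cf_q alpha s = - sgn s)%Z.
Proof.
  induction s.
  - simpl. ring.
  - rewrite p_rec, q_rec, sgn_S. simpl (pm alpha (S s)). simpl (qm alpha (S s)). nia.
Qed.

Lemma frac_ne0 (alpha : R) : irrational alpha -> frac_part alpha <> 0.
Proof.
  intros Hi H. apply Hi. exists (Int_part alpha), 1%Z. split; [lia|].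
  unfold frac_part in H. simpl. field_simplify. lra.
Qed.

Lemma Int_part_ge1 x : 1 < x -> (1 <= Int_part x)%Z.
Proof.
  intro H. destruct (base_Int_part x). assert (0 < IZR (Int_part x)) by lra.
  apply lt_IZR in H2. lia.
Qed.

Lemma inv_step (alpha : R) (Hi : irrational alpha) : forall s,
  frac_part (cf_x alpha s) <> 0 /\ 1 < cf_x alpha (S s) /\
  alpha * (IZR (cf_q alpha s) * cf_x alpha (S s) + IZR (qm alpha s)) =
    IZR (cf_p alpha s) * cf_x alpha (S s) + IZR (pm alpha s) /\
  (1 <= cf_q alpha s)%Z /\ (0 <= qm alpha s)%Z.
Proof.
  induction s.
  - pose proof (frac_ne0 _ Hi) as F. pose proof (base_fp alpha) as [F1 F2].
    assert (Fp : 0 < frac_part alpha) by lra.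
    simpl. split; [exact F|]. split.
    + rewrite <- Rinv_1. apply Rinv_lt_contravar; lra.
    + split; [|lia]. unfold cf_a. simpl.
      unfold frac_part in *. field. lra.
  - destruct IHs as [F [X1 [E [Q1 Q0]]]].
    set (x := cf_x alpha (S s)) in *.
    assert (Fx : frac_part x <> 0).
    { intro H0. apply Hi.
      pose proof (Int_part_ge1 _ X1) as A1.
      assert (Ex : x = IZR (Int_part x)) by (unfold frac_part in H0; lra).
      exists (cf_p alpha s * Int_part x + pm alpha s)%Z,
             (cf_q alpha s * Int_part x + qm alpha s)%Z.
      assert (Pz : (0 < cf_q alpha s * Int_part x)%Z) by (apply Z.mul_pos_pos; lia).
      split; [lia|].
      assert (Dpos : 0 < IZR (cf_q alpha s * Int_part x + qm alpha s)) by (apply IZR_lt; lia).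
      rewrite !plus_IZR, !mult_IZR in *. rewrite <- Ex.
      assert (1 <= IZR (cf_q alpha s)) by (apply IZR_le; lia).
      assert (0 <= IZR (qm alpha s)) by (apply IZR_le; lia).
      apply (Rmult_eq_reg_r (IZR (cf_q alpha s) * x + IZR (qm alpha s))); [|nra].
      rewrite E. field. nra. }
    pose proof (base_fp x) as [F1 F2].
    assert (Fp : 0 < frac_part x) by lra.
    split; [exact Fx|]. split.
    + change (cf_x alpha (S (S s))) with (/ frac_part x). rewrite <- Rinv_1. apply Rinv_lt_contravar; lra.
    + rewrite q_rec, p_rec. split; [|split].
      * change (cf_x alpha (S (S s))) with (/ frac_part x). simpl (qm alpha (S s)). simpl (pm alpha (S s)).
        unfold cf_a. change (cf_x alpha (S s)) with x. rewrite !plus_IZR, !mult_IZR.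
        assert (Ex : x = IZR (Int_part x) + frac_part x) by (unfold frac_part; ring).
        rewrite Ex in E.
        replace (alpha * ((IZR (Int_part x) * IZR (cf_q alpha s) + IZR (qm alpha s)) *
                 / frac_part x + IZR (cf_q alpha s)))
          with (alpha * (IZR (cf_q alpha s) * (IZR (Int_part x) + frac_part x) + IZR (qm alpha s)) / frac_part x)
          by (field; lra).
        rewrite E. field. lra.
      * unfold cf_a. change (cf_x alpha (S s)) with x. pose proof (Int_part_ge1 _ X1). nia.
      * simpl. lia.
Qed.

Lemma dist_lb (x c : R) : (forall m : Z, Rabs (x - IZR m) >= c) -> dist_Z x >= c.
Proof.
  intros H. unfold dist_Z.
  assert (E1 : frac_part x = Rabs (x - IZR (Int_part x))).
  { unfold frac_part. destruct (base_Int_part x). rewrite Rabs_right; lra. }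
  assert (E2 : 1 - frac_part x = Rabs (x - IZR (Int_part x + 1))).
  { unfold frac_part. rewrite plus_IZR. destruct (base_Int_part x).
    rewrite Rabs_left1; lra. }
  apply Rle_ge, Rmin_glb; [rewrite E1 | rewrite E2]; apply Rge_le, H.
Qed.

Lemma diff_le (a b : R) : 0 <= b - a -> a <= b.
Proof. lra. Qed.

Lemma div_ge (X c q : R) : 0 < q -> c * q <= X -> c <= X / q.
Proof.
  intros Hq H. apply (Rmult_le_reg_r q); [lra|]. unfold Rdiv.
  rewrite Rmult_assoc, Rinv_l, Rmult_1_r; lra.
Qed.

Section Core.
Variables (sg p P q Q n k : Z) (alpha t : R).
Hypothesis Hsg : (sg = 1 \/ sg = -1)%Z.
Hypothesis Hdet : (Q * p - P * q = - sg)%Z.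
Hypothesis Hal : IZR q * alpha - IZR p = IZR sg * t.
Hypothesis Ht : 0 < t.
Hypothesis HtQ : t * IZR Q < 1.
Hypothesis HtQ2 : 1 <= 2 * t * IZR Q.
Hypothesis Hq : (1 <= q <= n)%Z.
Hypothesis HnQ : (n < Q)%Z.
Hypothesis Hk : (1 <= k <= n)%Z.

Lemma key (m : Z) :
  Rabs (IZR k * alpha - IZR m) = Rabs (IZR (sg * (k * p - m * q)) + IZR k * t) / IZR q.
Proof.
  assert (Hq0 : 0 < IZR q) by (apply IZR_lt; lia).
  assert (E : IZR k * alpha - IZR m =
     IZR sg * (IZR (sg * (k * p - m * q)) + IZR k * t) / IZR q).
  { assert (alpha = (IZR p + IZR sg * t) / IZR q) by (field_simplify_eq; lra).
    rewrite H. rewrite !mult_IZR, minus_IZR, !mult_IZR.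
    destruct Hsg; subst sg; simpl; [field|field]; lra. }
  assert (Hs : Rabs (IZR sg) = 1).
  { destruct Hsg; subst sg; [apply Rabs_R1|]. rewrite Rabs_left; simpl; lra. }
  rewrite E. unfold Rdiv. rewrite !Rabs_mult, Rabs_inv, (Rabs_right (IZR q)), Hs by lra.
  ring.
Qed.

Lemma kt_bounds : 0 < IZR k * t < 1.
Proof.
  assert (1 <= IZR k) by (apply IZR_le; lia).
  assert (IZR k < IZR Q) by (apply IZR_lt; lia).
  split; nra.
Qed.

Lemma cases_w (z : Z) :
  let w := IZR z + IZR k * t in
  (1 <= Rabs w) \/ (z = 0%Z /\ Rabs w = IZR k * t) \/ (z = (-1)%Z /\ Rabs w = 1 - IZR k * t).
Proof.
  intro w. pose proof kt_bounds.
  destruct (Z_lt_le_dec z (-1)) as [h|h].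
  { left. assert (IZR z <= -2) by (apply IZR_le; lia). unfold w. rewrite Rabs_left1; lra. }
  destruct (Z.eq_dec z (-1)) as [e|e].
  { right; right. split; auto. unfold w; subst z. rewrite Rabs_left1; simpl; lra. }
  destruct (Z.eq_dec z 0) as [e0|e0].
  { right; left. split; auto. unfold w; subst z. rewrite Rabs_right; simpl; lra. }
  left. assert (1 <= IZR z) by (apply IZR_le; lia). unfold w. rewrite Rabs_right; lra.
Qed.

Lemma factor_any (m : Z) : Rabs (IZR k * alpha - IZR m) >= / (2 * IZR n * IZR Q).
Proof.
  rewrite key. pose proof kt_bounds.
  assert (Hq0 : 1 <= IZR q) by (apply IZR_le; lia).
  assert (Hqn : IZR q <= IZR n) by (apply IZR_le; lia).
  assert (HnQ' : IZR n + 1 <= IZR Q) by (rewrite <- (plus_IZR n 1); apply IZR_le; lia).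
  assert (Hk1 : 1 <= IZR k) by (apply IZR_le; lia).
  assert (HkQ : IZR k + 1 <= IZR Q) by (rewrite <- (plus_IZR k 1); apply IZR_le; lia).
  assert (B : t / IZR q >= / (2 * IZR n * IZR Q)).
  { apply Rle_ge. apply diff_le.
    replace (t / IZR q - / (2 * IZR n * IZR Q)) with
      ((2 * IZR n * IZR Q * t - IZR q) / (2 * IZR n * IZR Q * IZR q)) by (field; nra).
    assert (IZR n <= 2 * t * IZR Q * IZR n).
    { rewrite <- (Rmult_1_l (IZR n)) at 1. apply Rmult_le_compat_r; lra. }
    unfold Rdiv; apply Rmult_le_pos; [nra | apply Rlt_le, Rinv_0_lt_compat].
    apply Rmult_lt_0_compat; [|lra]. apply Rmult_lt_0_compat; lra. }
  assert (Ht1 : t < 1) by nra.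
  assert (Hkt : IZR k * t + t <= IZR Q * t) by nra.
  assert (W : t <= Rabs (IZR (sg * (k * p - m * q)) + IZR k * t)).
  { destruct (cases_w (sg * (k * p - m * q))) as [h|[[_ h]|[_ h]]]; cbv zeta in h;
      [|rewrite h..]; nra. }
  apply Rle_ge. apply Rle_trans with (t / IZR q); [lra|].
  unfold Rdiv; apply Rmult_le_compat_r; [apply Rlt_le, Rinv_0_lt_compat; lra | exact W].
Qed.

Lemma factor_nondiv (m : Z) : (k mod q <> 0)%Z ->
  Rabs (IZR k * alpha - IZR m) >= / (2 * IZR n).
Proof.
  intro Hnd. rewrite key. pose proof kt_bounds.
  assert (Hq0 : 1 <= IZR q) by (apply IZR_le; lia).
  assert (Hqn : IZR q <= IZR n) by (apply IZR_le; lia).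
  assert (Hk1 : 1 <= IZR k) by (apply IZR_le; lia).
  assert (HQ0 : 0 < IZR Q) by (apply IZR_lt; lia).
  assert (Hn : 1 <= IZR n) by lra.
  assert (Hinv : / (2 * IZR n) * IZR q <= 1).
  { apply Rle_trans with (/ (2 * IZR n) * (2 * IZR n)).
    apply Rmult_le_compat_l; [apply Rlt_le, Rinv_0_lt_compat|]; lra.
    rewrite Rinv_l; lra. }
  destruct (cases_w (sg * (k * p - m * q))) as [h|[[hz h]|[hz h]]]; cbv zeta in h.
  - apply Rle_ge, div_ge; lra.
  - rewrite h. exfalso. apply Hnd.
    assert (k = sg * (k * P - Q * m) * q)%Z by (destruct Hsg; subst sg; nia).
    rewrite H0. apply Z.mod_mul. lia.
  - rewrite h. set (j := (sg * ((Q - k) * P - Q * (P - m)))%Z).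
    assert (Hj : (j * q = Q - k)%Z) by (unfold j; destruct Hsg; subst sg; nia).
    assert (Hj1 : (1 <= j)%Z) by nia.
    assert (Hj2 : (Q <= 2 * n * j)%Z) by nia.
    assert (Rj : IZR j * IZR q = IZR Q - IZR k) by (rewrite <- mult_IZR, Hj, minus_IZR; auto).
    assert (Rj2 : IZR Q <= 2 * IZR n * IZR j) by
      (replace (2 * IZR n * IZR j) with (IZR (2 * n * j)) by (rewrite !mult_IZR; auto);
       apply IZR_le; auto).
    assert (Htinv : t <= / IZR Q).
    { apply Rlt_le. apply (Rmult_lt_reg_r (IZR Q)); [lra|]. rewrite Rinv_l; lra. }
    assert (A : IZR j / IZR Q * IZR q <= 1 - IZR k * t).
    { replace (IZR j / IZR Q * IZR q) with (1 - IZR k * / IZR Q).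
      2:{ unfold Rdiv. rewrite Rmult_assoc, (Rmult_comm (/ IZR Q)), <- Rmult_assoc, Rj. field. lra. }
      assert (IZR k * t <= IZR k * / IZR Q) by (apply Rmult_le_compat_l; lra). lra. }
    assert (B : / (2 * IZR n) <= IZR j / IZR Q).
    { apply div_ge; [lra|].
      apply Rle_trans with (/ (2 * IZR n) * (2 * IZR n * IZR j)).
      apply Rmult_le_compat_l; [apply Rlt_le, Rinv_0_lt_compat; lra| lra].
      right. field. lra. }
    apply Rle_ge, div_ge; [lra|].
    apply Rle_trans with (IZR j / IZR Q * IZR q); [|exact A].
    apply Rmult_le_compat_r; lra.
Qed.
End Core.

Lemma div_step (m qn : nat) : (1 <= qn)%nat ->
  (S m mod qn = 0 -> S m / qn = m / qn + 1)%nat /\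
  (S m mod qn <> 0 -> S m / qn = m / qn)%nat.
Proof.
  intro Hq.
  pose proof (Nat.div_mod_eq m qn) as E1. pose proof (Nat.div_mod_eq (S m) qn) as E2.
  pose proof (Nat.mod_upper_bound m qn ltac:(lia)).
  pose proof (Nat.mod_upper_bound (S m) qn ltac:(lia)).
  split; intro h; nia.
Qed.

Lemma D_bound (alpha : R) (n qn : nat) (Q : R) (HQ : 1 <= Q) (Hqn : (1 <= qn)%nat)
  (Hn : 0 < INR n)
  (Fany : forall k, (1 <= k <= n)%nat -> dist_Z (INR k * alpha) >= / (2 * INR n * Q))
  (Fnd : forall k, (1 <= k <= n)%nat -> (k mod qn <> 0)%nat ->
     dist_Z (INR k * alpha) >= / (2 * INR n)) :
  forall m, (m <= n)%nat -> D alpha m >= / (2 * INR n) ^ m * / Q ^ (m / qn).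
Proof.
  induction m as [|m IH]; intro Hm.
  - simpl. rewrite Nat.div_0_l by lia. simpl. lra.
  - specialize (IH ltac:(lia)).
    assert (Hpos : 0 < / (2 * INR n) ^ m * / Q ^ (m / qn)).
    { apply Rmult_lt_0_compat; apply Rinv_0_lt_compat, pow_lt; lra. }
    change (D alpha (S m)) with (D alpha m * dist_Z (INR (S m) * alpha)).
    destruct (div_step m qn Hqn) as [D1 D2].
    destruct (Nat.eq_dec (S m mod qn) 0) as [h|h].
    + rewrite (D1 h).
      replace (/ (2 * INR n) ^ S m * / Q ^ (m / qn + 1))
        with (/ (2 * INR n) ^ m * / Q ^ (m / qn) * / (2 * INR n * Q)).
      2:{ rewrite pow_add. simpl. field. repeat split; try apply pow_nonzero; lra. }
      pose proof (Fany (S m) ltac:(lia)).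
      assert (0 < / (2 * INR n * Q)) by (apply Rinv_0_lt_compat; nra).
      apply Rle_ge, Rmult_le_compat; lra.
    + rewrite (D2 h).
      replace (/ (2 * INR n) ^ S m * / Q ^ (m / qn))
        with (/ (2 * INR n) ^ m * / Q ^ (m / qn) * / (2 * INR n)).
      2:{ simpl. field. repeat split; try apply pow_nonzero; lra. }
      pose proof (Fnd (S m) ltac:(lia) h).
      assert (0 < / (2 * INR n)) by (apply Rinv_0_lt_compat; nra).
      apply Rle_ge, Rmult_le_compat; lra.
Qed.

Theorem lemma2 (alpha : R) (s n : nat) :
  irrational alpha ->
  (cf_q alpha s <= Z.of_nat n)%Z ->
  (Z.of_nat n < cf_q alpha (S s))%Z ->
  D alpha n >=
    / (2 * INR n) ^ n
    * Rpower (IZR (cf_q alpha (S s))) (- INR n / IZR (cf_q alpha s)).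
Proof.
  intros Hi H1 H2.
  destruct (inv_step alpha Hi s) as [_ [X1 [E [Q1 Q0]]]].
  destruct (inv_step alpha Hi (S s)) as [Fx _].
  pose proof (det alpha s) as Ds. pose proof (det alpha (S s)) as DS.
  rewrite sgn_S in DS. simpl (qm alpha (S s)) in DS. simpl (pm alpha (S s)) in DS.
  pose proof (q_rec alpha s) as QR.
  set (q := cf_q alpha s) in *. set (Q := cf_q alpha (S s)) in *.
  set (p := cf_p alpha s) in *. set (P := cf_p alpha (S s)) in *.
  set (x := cf_x alpha (S s)) in *. set (qm0 := qm alpha s) in *.
  set (pm0 := pm alpha s) in *.
  assert (Ha : cf_a alpha (S s) = Int_part x) by reflexivity.
  rewrite Ha in QR.
  set (a := Int_part x) in *.
  pose proof (base_fp x) as [F1 F2].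
  assert (Fp : 0 < frac_part x) by lra.
  assert (Ex : x = IZR a + frac_part x) by (unfold frac_part; fold a; ring).
  assert (Rq : 1 <= IZR q) by (apply IZR_le; lia).
  assert (Rqm : 0 <= IZR qm0) by (apply IZR_le; lia).
  assert (RQ : IZR Q = IZR a * IZR q + IZR qm0) by (rewrite QR, plus_IZR, mult_IZR; ring).
  assert (RqQ : IZR q <= IZR Q) by (apply IZR_le; lia).
  set (den := IZR q * x + IZR qm0).
  assert (Dp : 0 < den) by (unfold den; nra).
  set (t := / den).
  assert (Ht : 0 < t) by (apply Rinv_0_lt_compat; lra).
  assert (HdenQ : IZR Q < den) by (unfold den; rewrite RQ, Ex; nra).
  assert (HdenQ2 : den <= 2 * IZR Q) by (unfold den; rewrite RQ in *; rewrite Ex; nra).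
  assert (HtQ : t * IZR Q < 1).
  { unfold t. apply (Rmult_lt_reg_r den); [lra|].
    rewrite Rmult_assoc, (Rmult_comm (IZR Q)), <- Rmult_assoc, Rinv_l; lra. }
  assert (HtQ2 : 1 <= 2 * t * IZR Q).
  { unfold t. apply (Rmult_le_reg_r den); [lra|].
    replace (2 * / den * IZR Q * den) with (2 * IZR Q) by (field; lra). lra. }
  assert (Hal : IZR q * alpha - IZR p = IZR (sgn s) * t).
  { unfold t. apply (Rmult_eq_reg_r den); [|lra].
    replace (IZR (sgn s) * / den * den) with (IZR (sgn s)) by (field; lra).
    replace ((IZR q * alpha - IZR p) * den) with (IZR q * (alpha * den) - IZR p * den) by ring.
    unfold den. rewrite E.
    assert (IZR (p * qm0 - pm0 * q) = IZR (- sgn s)) by (rewrite Ds; auto).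
    rewrite minus_IZR, !mult_IZR, opp_IZR in H. lra. }
  assert (Hsg : (sgn s = 1 \/ sgn s = -1)%Z) by (unfold sgn; destruct (Nat.even s); auto).
  assert (Hdet : (Q * p - P * q = - sgn s)%Z) by lia.
  set (qn := Z.to_nat q).
  assert (Eqn : Z.of_nat qn = q) by (unfold qn; apply Z2Nat.id; lia).
  assert (Hqn : (1 <= qn)%nat) by lia.
  assert (HnZ : (1 <= Z.of_nat n)%Z) by lia.
  assert (Hn : 0 < INR n) by (rewrite INR_IZR_INZ; apply IZR_lt; lia).
  assert (RQ1 : 1 <= IZR Q) by (apply IZR_le; lia).
  assert (HB := D_bound alpha n qn (IZR Q) RQ1 Hqn Hn).
  assert (Fany : forall k, (1 <= k <= n)%nat -> dist_Z (INR k * alpha) >= / (2 * INR n * IZR Q)).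
  { intros k Hk. apply dist_lb. intro m. rewrite !INR_IZR_INZ.
    apply (factor_any (sgn s) p P q Q (Z.of_nat n) (Z.of_nat k) alpha t); auto; lia. }
  assert (Fnd : forall k, (1 <= k <= n)%nat -> (k mod qn <> 0)%nat ->
     dist_Z (INR k * alpha) >= / (2 * INR n)).
  { intros k Hk Hm. apply dist_lb. intro m. rewrite !INR_IZR_INZ.
    apply (factor_nondiv (sgn s) p P q Q (Z.of_nat n) (Z.of_nat k) alpha t); auto; try lia.
    rewrite <- Eqn, <- Nat2Z.inj_mod. lia. }
  specialize (HB Fany Fnd n (le_n n)).
  apply Rge_trans with (1 := HB). apply Rle_ge.
  apply Rmult_le_compat_l; [apply Rlt_le, Rinv_0_lt_compat, pow_lt; lra|].
  rewrite <- Rpower_pow by lra. rewrite <- Rpower_Ropp.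
  apply Rle_Rpower; [lra|].
  assert (Hd : INR (n / qn) * IZR q <= INR n).
  { rewrite <- Eqn, <- INR_IZR_INZ, <- mult_INR. apply le_INR.
    rewrite Nat.mul_comm. apply Nat.Div0.mul_div_le. }
  unfold Rdiv. rewrite Ropp_mult_distr_l_reverse. apply Ropp_le_contravar.
  apply (Rmult_le_reg_r (IZR q)); [lra|].
  rewrite Rmult_assoc, Rinv_l, Rmult_1_r by lra. exact Hd.
Qed.
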